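(* Let $L\geq 1$ be an integer and define, for $\beta\in(0,1)$, $$f(\beta)=\frac{(1-\beta^{2L})^2}{L^2\beta^{2L}(1-\beta^2)}.$$ Then $f$ is strictly decreasing on $(0,1)$.
   Context: $L$ is the number of users of a broadcast channel; $f(\beta)$ is the limit $\lim_{N\to\infty}\|\mathbf{F}\|_F^2/N$ of the normalized squared Frobenius norm of the base encoding matrix of the scheme, but the claim is purely about the displayed real function. *)

(* Defs.v *)
From Stdlib Require Import Reals.
Open Scope R_scope.

Definition fL (L : nat) (beta : R) : R :=
  (1 - beta ^ (2 * L)) ^ 2 / ((INR L) ^ 2 * beta ^ (2 * L) * (1 - beta ^ 2)).

(* Main.v *)
Require Import Defs.
From Stdlib Require Import Reals Lra Lia.
Open Scope R_scope.

Lemma geo_mono (a c : R) (n : nat) : 0 <= a <= c ->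
  sum_f_R0 (fun i => a ^ i) n <= sum_f_R0 (fun i => c ^ i) n.
Proof.
  intros H; induction n as [|n IH]; simpl.
  - lra.
  - assert (a ^ S n <= c ^ S n) by (apply pow_incr; lra). simpl in H0. lra.
Qed.

Lemma geo_pos (a : R) (n : nat) : 0 < a -> 0 < sum_f_R0 (fun i => a ^ i) n.
Proof.
  intros H; induction n as [|n IH]; simpl.
  - lra.
  - assert (0 < a ^ S n) by (apply pow_lt; lra). simpl in H0. lra.
Qed.

Lemma pow_strict (a c : R) (n : nat) : 0 <= a < c -> (1 <= n)%nat -> a ^ n < c ^ n.
Proof.
  intros H Hn; induction n as [|n IH]; [lia|].
  destruct n as [|n]; simpl; [lra|].
  assert (IH' := IH ltac:(lia)). simpl in IH'.
  assert (0 <= a * a ^ n) by (apply pow_le with (n := S n); lra).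
  apply Rle_lt_trans with (c * (a * a ^ n)); [apply Rmult_le_compat_r; lra|].
  apply Rmult_lt_compat_l; lra.
Qed.

Lemma fL_eq (L : nat) (b : R) : (1 <= L)%nat -> 0 < b < 1 ->
  fL L b = (1 - (b^2)^L) * (/ b^2) * sum_f_R0 (fun i => (/ b^2) ^ i) (pred L) / (INR L)^2.
Proof.
  intros HL Hb.
  assert (Hx : 0 < b^2 < 1) by (split; nra).
  rewrite tech3.
  2:{ intro E. assert (b^2 * / b^2 = 1) by (field; lra). nra. }
  replace (S (pred L)) with L by lia.
  unfold fL. rewrite pow_mult, pow_inv.
  assert (HX : 0 < (b^2)^L) by (apply pow_lt; lra).
  assert (HLr : INR L <> 0) by (apply not_0_INR; lia).
  set (x := b^2) in *. set (X := x^L) in *.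
  assert (1 - / x <> 0).
  { intro E. assert (x * / x = 1) by (field; lra). nra. }
  field. repeat split; try lra; auto.
Qed.

Theorem lemma1 (L : nat) (HL : (1 <= L)%nat) :
  forall b1 b2 : R, 0 < b1 -> b1 < b2 -> b2 < 1 -> fL L b2 < fL L b1.
Proof.
  intros b1 b2 H1 H12 H2.
  rewrite (fL_eq L b1), (fL_eq L b2) by (auto; lra).
  assert (Hx : 0 < b1^2 < b2^2) by (split; nra).
  assert (Hx2 : b2^2 < 1) by nra.
  assert (HLr : 0 < INR L ^ 2) by (apply pow_lt, lt_0_INR; lia).
  assert (Hy : / b2^2 < / b1^2) by (apply Rinv_lt_contravar; nra).
  assert (Hy0 : 0 < / b2^2) by (apply Rinv_0_lt_compat; lra).
  assert (HX : (b1^2)^L < (b2^2)^L) by (apply pow_strict; [lra|lia]).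
  assert (HX2 : (b2^2)^L < 1) by (apply pow_lt_1_compat; [lra|lia]).
  assert (HP := geo_mono (/ b2^2) (/ b1^2) (pred L) ltac:(lra)).
  assert (HP0 := geo_pos (/ b2^2) (pred L) Hy0).
  unfold Rdiv. apply Rmult_lt_compat_r; [apply Rinv_0_lt_compat; lra|].
  set (P1 := sum_f_R0 (fun i => (/ b1^2) ^ i) (pred L)) in *.
  set (P2 := sum_f_R0 (fun i => (/ b2^2) ^ i) (pred L)) in *.
  assert (A : 0 < 1 - (b2^2)^L) by lra.
  apply Rlt_le_trans with ((1 - (b1 ^ 2) ^ L) * / b2 ^ 2 * P2).
  - apply Rmult_lt_compat_r; [lra|]. apply Rmult_lt_compat_r; lra.
  - apply Rmult_le_compat; try lra.
    + apply Rmult_le_pos; lra.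
    + apply Rmult_le_compat_l; lra.
Qed.
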